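(* If an irreducible billiard-like interval exchange transformation $f$ of $I=[-1,1)$ satisfies the modified Keane condition, then $f$ is minimal, i.e. every orbit of $f$ is dense in $I$.
   Context: An interval exchange transformation of $I=[-1,1)$: a finite partition $\{I_\alpha\}_{\alpha\in\mathcal{A}}$ of $I$ into intervals closed on the left and open on the right ($|\mathcal{A}|\ge2$), and a bijection $f:I\to I$ whose restriction to each $I_\alpha$ is a translation; let $\pi_0:\mathcal{A}\to\{1,\dots,|\mathcal{A}|\}$ give the order of the intervals $I_\alpha$ in $I$ from left to right, and let $p_\alpha$ be the left endpoint of $I_\alpha$. $f$ is irreducible if for no $k<|\mathcal{A}|$ the union $I_{\pi_0^{-1}(1)}\cup\dots\cup I_{\pi_0^{-1}(k)}$ is invariant under $f$. $f$ is billiard-like if: each $I_\alpha$ is contained in $[-1,0)$ or in $[0,1)$; each $f(I_\alpha)$ is contained in $[-1,0)$ or in $[0,1)$; and each of $[-1,0)$, $[0,1)$ contains at least two intervals of the partition. A billiard-like $f$ satisfies the modified Keane condition if $f^m(p_\alpha)\ne p_\beta$ for all $m\ge1$, all $\alpha\in\mathcal{A}$, and all $\beta\in\mathcal{A}$ with $p_\beta\notin\{-1,0\}$. *)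

(* Defs.v *)
From Stdlib Require Import Reals Lra Lia.
Open Scope R_scope.

Definition inI (x : R) : Prop := -1 <= x < 1.

(* A partition of I into n intervals closed on the left, open on the right,
   listed from left to right (so the labelling pi0 is the identity):
   I_k = [p k, p (k+1)) for k < n, with p 0 = -1, p n = 1, p strictly increasing. *)
Definition is_partition (n : nat) (p : nat -> R) : Prop :=
  p 0%nat = -1 /\ p n = 1 /\ (forall k, (k < n)%nat -> p k < p (S k)).

Definition inIk (p : nat -> R) (k : nat) (x : R) : Prop := p k <= x < p (S k).

Definition is_IET (n : nat) (p : nat -> R) (f : R -> R) : Prop :=
  (2 <= n)%nat /\ is_partition n p /\
  (forall x, inI x -> inI (f x)) /\
  (forall x y, inI x -> inI y -> f x = f y -> x = y) /\
  (forall y, inI y -> exists x, inI x /\ f x = y) /\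
  (forall k, (k < n)%nat -> exists t, forall x, inIk p k x -> f x = x + t).

Definition invariant (f : R -> R) (U : R -> Prop) : Prop :=
  forall x, U x -> U (f x).

Definition first_union (p : nat -> R) (k : nat) (x : R) : Prop :=
  exists j, (j < k)%nat /\ inIk p j x.

Definition irreducible (n : nat) (p : nat -> R) (f : R -> R) : Prop :=
  forall k, (1 <= k)%nat -> (k < n)%nat -> ~ invariant f (first_union p k).

Definition in_left (x : R) : Prop := -1 <= x < 0.
Definition in_right (x : R) : Prop := 0 <= x < 1.

Definition billiard_like (n : nat) (p : nat -> R) (f : R -> R) : Prop :=
  (forall k, (k < n)%nat ->
     (forall x, inIk p k x -> in_left x) \/ (forall x, inIk p k x -> in_right x)) /\
  (forall k, (k < n)%nat ->
     (forall x, inIk p k x -> in_left (f x)) \/ (forall x, inIk p k x -> in_right (f x))) /\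
  (exists k1 k2, (k1 < n)%nat /\ (k2 < n)%nat /\ k1 <> k2 /\
     (forall x, inIk p k1 x -> in_left x) /\ (forall x, inIk p k2 x -> in_left x)) /\
  (exists k1 k2, (k1 < n)%nat /\ (k2 < n)%nat /\ k1 <> k2 /\
     (forall x, inIk p k1 x -> in_right x) /\ (forall x, inIk p k2 x -> in_right x)).

Definition modified_keane (n : nat) (p : nat -> R) (f : R -> R) : Prop :=
  forall m a b, (1 <= m)%nat -> (a < n)%nat -> (b < n)%nat ->
    p b <> -1 -> p b <> 0 -> Nat.iter m f (p a) <> p b.

Definition in_orbit (f : R -> R) (x z : R) : Prop :=
  exists m : nat, Nat.iter m f x = z \/ Nat.iter m f z = x.

Definition minimal (f : R -> R) : Prop :=
  forall x, inI x -> forall y, inI y -> forall eps, 0 < eps ->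
    exists z, inI z /\ in_orbit f x z /\ Rabs (z - y) < eps.

(* Main.v *)
Require Import Defs.
From Stdlib Require Import Reals Lra Lia List ZArith ClassicalEpsilon Classical.
Open Scope R_scope.

Lemma least_ex (P : nat -> Prop) : (exists j, P j) ->
  exists j, P j /\ forall i, (i < j)%nat -> ~ P i.
Proof.
  intros [j Hj].
  assert (H : forall N, (forall k, (k <= N)%nat -> P k -> exists j, P j /\ forall i, (i < j)%nat -> ~ P i)).
  { induction N as [|N IH]; intros k Hk Pk.
    - exists k; split; auto. intros i Hi; lia.
    - destruct (classic (exists i, (i < k)%nat /\ P i)) as [[i [Hi Pi]]|Hn].
      + apply (IH i); auto; lia.
      + exists k; split; auto. intros i Hi Pi; apply Hn; eauto. }
  apply (H j j); auto.
Qed.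

Lemma iter_S (h : R -> R) m x : Nat.iter (S m) h x = h (Nat.iter m h x).
Proof. reflexivity. Qed.

Lemma nat_pigeon (M K : nat) (k : nat -> nat) :
  (forall i, (i <= M)%nat -> (k i <= K)%nat) ->
  (forall i j, (i <= M)%nat -> (j <= M)%nat -> k i = k j -> i = j) -> (M <= K)%nat.
Proof.
  intros Hb Hi.
  assert (Hnd : NoDup (map k (seq 0 (S M)))).
  { apply NoDup_map_NoDup_ForallPairs; [|apply seq_NoDup].
    intros a b Ha Hb' E. apply in_seq in Ha. apply in_seq in Hb'. apply Hi; auto; lia. }
  assert (Hinc : incl (map k (seq 0 (S M))) (seq 0 (S K))).
  { intros a Ha. apply in_map_iff in Ha. destruct Ha as [i [<- Hi']].
    apply in_seq in Hi'. apply in_seq. specialize (Hb i). lia. }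
  pose proof (NoDup_incl_length Hnd Hinc) as L.
  rewrite length_map, !length_seq in L. lia.
Qed.

Lemma Int_part_nonneg r : 0 <= r -> (0 <= Int_part r)%Z.
Proof.
  intros Hr. destruct (base_Int_part r) as [_ H2].
  assert (IZR (Int_part r) > -1) by lra.
  apply lt_IZR in H. lia.
Qed.

Lemma real_pigeon (s : nat -> R) (M : nat) (d : R) : 0 < d ->
  (forall i, (i <= M)%nat -> -1 <= s i <= 1) ->
  (forall i j, (i <= M)%nat -> (j <= M)%nat -> i <> j -> d <= Rabs (s i - s j)) ->
  INR M * d <= 2.
Proof.
  intros Hd Hs Hsep.
  set (r i := (s i + 1) / d).
  set (k i := Z.to_nat (Int_part (r i))).
  set (K := Z.to_nat (Int_part (2 / d))).
  assert (Hr : forall i, (i <= M)%nat -> 0 <= r i <= 2 / d).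
  { intros i Hi. specialize (Hs i Hi). unfold r. split.
    - apply Rmult_le_pos; [lra| left; apply Rinv_0_lt_compat; lra].
    - unfold Rdiv. apply Rmult_le_compat_r; [left; apply Rinv_0_lt_compat; lra| lra]. }
  assert (Hk : forall i, (i <= M)%nat -> INR (k i) = IZR (Int_part (r i))).
  { intros i Hi. unfold k. rewrite INR_IZR_INZ, Z2Nat.id; auto.
    apply Int_part_nonneg. apply Hr; auto. }
  assert (HK : INR K = IZR (Int_part (2/d))).
  { unfold K. rewrite INR_IZR_INZ, Z2Nat.id; auto. apply Int_part_nonneg.
    unfold Rdiv; apply Rmult_le_pos; [lra| left; apply Rinv_0_lt_compat; lra]. }
  assert (HMK : (M <= K)%nat).
  { apply (nat_pigeon M K k).
    - intros i Hi. apply INR_le. rewrite Hk, HK; auto.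
      destruct (Hr i Hi) as [_ H2].
      destruct (base_Int_part (r i)) as [A1 A2]. destruct (base_Int_part (2/d)) as [B1 B2].
      assert (IZR (Int_part (r i)) < IZR (Int_part (2/d)) + 1) by lra.
      rewrite <- plus_IZR in H. apply lt_IZR in H. apply IZR_le. lia.
    - intros i j Hi Hj E. destruct (Nat.eq_dec i j) as [|Hne]; auto. exfalso.
      specialize (Hsep i j Hi Hj Hne).
      assert (E' : Int_part (r i) = Int_part (r j)).
      { apply (f_equal Z.of_nat) in E. unfold k in E.
        rewrite !Z2Nat.id in E; auto; apply Int_part_nonneg; apply Hr; auto. }
      destruct (base_Int_part (r i)) as [A1 A2]. destruct (base_Int_part (r j)) as [B1 B2].
      rewrite E' in A1, A2.
      assert (Hrr : Rabs (r i - r j) < 1) by (apply Rabs_def1; lra).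
      assert (Hrr' : r i - r j = (s i - s j) / d) by (unfold r; field; lra).
      rewrite Hrr' in Hrr. unfold Rdiv in Hrr. rewrite Rabs_mult in Hrr.
      rewrite (Rabs_right (/ d)) in Hrr by (left; apply Rinv_0_lt_compat; lra).
      apply (Rmult_lt_compat_r d) in Hrr; [|lra].
      rewrite Rmult_assoc, Rinv_l, Rmult_1_r, Rmult_1_l in Hrr by lra. lra. }
  apply le_INR in HMK. rewrite HK in HMK.
  destruct (base_Int_part (2/d)) as [B1 _].
  assert (INR M <= 2 / d) by lra.
  apply (Rmult_le_compat_r d) in H; [|lra].
  unfold Rdiv in H. rewrite Rmult_assoc, Rinv_l, Rmult_1_r in H by lra. exact H.
Qed.

Lemma core (ys ds : nat -> R) (bs : list R) (Seg : nat -> R -> Prop) :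
  (forall j, 0 < ds j) -> (forall j, -1 <= ys j <= 1) ->
  (forall j, ds (S j) = ds j \/ exists b, In b bs /\ Seg j b) ->
  (forall i j b, Seg i b -> Seg j b -> i = j) ->
  (forall i j, i <> j -> Rmin (ds i) (ds j) <= Rabs (ys i - ys j)) -> False.
Proof.
  intros Hd Hy Hstep Hu Hsep.
  assert (Hev : forall l : list R, exists J, forall j b, (J <= j)%nat -> In b l -> ~ Seg j b).
  { induction l as [|b0 l [J HJ]].
    - exists 0%nat. intros j b _ [].
    - destruct (classic (exists j0, Seg j0 b0)) as [[j0 Hj0]|Hn].
      + exists (Nat.max J (S j0)). intros j b Hj [<-|Hb] Hs.
        * pose proof (Hu _ _ _ Hs Hj0). lia.
        * apply (HJ j b); auto; lia.
      + exists J. intros j b Hj [<-|Hb] Hs.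
        * apply Hn; eauto.
        * apply (HJ j b); auto. }
  destruct (Hev bs) as [J HJ].
  assert (Hc : forall k, ds (J + k)%nat = ds J).
  { induction k as [|k IH]. - rewrite Nat.add_0_r; auto.
    - rewrite Nat.add_succ_r. destruct (Hstep (J + k)%nat) as [E|[b [Hb Hs]]].
      + rewrite E; auto.
      + exfalso. apply (HJ (J+k)%nat b); auto; lia. }
  set (d := ds J).
  assert (Hdp : 0 < d) by apply Hd.
  set (N := Z.to_nat (up (2 / d))).
  assert (HN : INR N > 2 / d).
  { destruct (archimed (2/d)) as [A1 _].
    assert (0 < 2 / d) by (unfold Rdiv; apply Rmult_lt_0_compat; [lra|apply Rinv_0_lt_compat; lra]).
    unfold N. rewrite INR_IZR_INZ, Z2Nat.id; auto.
    apply le_IZR. lra. }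
  assert (Hp := real_pigeon (fun i => ys (J + i)%nat) N d Hdp).
  assert (INR N * d <= 2).
  { apply Hp.
    - intros i _. apply Hy.
    - intros i j _ _ Hne. specialize (Hsep (J+i)%nat (J+j)%nat ltac:(lia)).
      rewrite !Hc in Hsep. rewrite Rmin_left in Hsep by lra. exact Hsep. }
  apply (Rmult_gt_compat_r d) in HN; [|lra].
  unfold Rdiv in HN. rewrite Rmult_assoc, Rinv_l, Rmult_1_r in HN by lra. lra.
Qed.

Definition Pl (n : nat) (p : nat -> R) : list R := map p (seq 1 (n - 1)).
Definition Ql (n : nat) (p : nat -> R) (f : R -> R) : list R := map (fun k => f (p k)) (seq 0 n).

Lemma InPl n p b : (1 <= n)%nat -> (In b (Pl n p) <-> exists k, (1 <= k < n)%nat /\ p k = b).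
Proof.
  intros Hn. unfold Pl. rewrite in_map_iff. split.
  - intros [k [E Hk]]. apply in_seq in Hk. exists k; split; auto; lia.
  - intros [k [Hk E]]. exists k; split; auto. apply in_seq; lia.
Qed.

Lemma InQl n p f b : In b (Ql n p f) <-> exists k, (k < n)%nat /\ f (p k) = b.
Proof.
  unfold Ql. rewrite in_map_iff. split.
  - intros [k [E Hk]]. apply in_seq in Hk. exists k; split; auto; lia.
  - intros [k [Hk E]]. exists k; split; auto. apply in_seq; lia.
Qed.

Lemma p_incr n p : is_partition n p -> forall i j, (i < j)%nat -> (j <= n)%nat -> p i < p j.
Proof.
  intros [H0 [H1 H2]] i j Hij. induction j as [|j IH]; intros Hj; [lia|].
  destruct (Nat.eq_dec i j) as [->|Hne].
  - apply H2; lia.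
  - apply Rlt_trans with (p j); [apply IH; lia| apply H2; lia].
Qed.

Lemma p_le n p : is_partition n p -> forall i j, (i <= j)%nat -> (j <= n)%nat -> p i <= p j.
Proof.
  intros Hp i j Hij Hj. destruct (Nat.eq_dec i j) as [->|]; [lra|].
  left; apply (p_incr n p Hp); lia.
Qed.

Lemma find_int n p x : is_partition n p -> inI x -> exists k, (k < n)%nat /\ inIk p k x.
Proof.
  intros Hp Hx. destruct Hp as [H0 [H1 H2]] eqn:E.
  assert (G : forall j, (j <= n)%nat -> x < p j -> exists k, (k < j)%nat /\ inIk p k x).
  { induction j as [|j IH]; intros Hj Hxj.
    - unfold inI in Hx. lra.
    - destruct (Rlt_dec x (p j)) as [Hl|Hl].
      + destruct (IH ltac:(lia) Hl) as [k [Hk Hk']]. exists k; split; auto.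
      + exists j; split; auto. unfold inIk; lra. }
  destruct (G n ltac:(lia)) as [k [Hk Hk']]; [unfold inI in Hx; lra|].
  eauto.
Qed.

Lemma int_uniq n p x i j : is_partition n p -> (i < n)%nat -> (j < n)%nat ->
  inIk p i x -> inIk p j x -> i = j.
Proof.
  intros Hp Hi Hj [A1 A2] [B1 B2].
  destruct (Nat.lt_trichotomy i j) as [H|[H|H]]; auto; exfalso.
  - assert (p (S i) <= p j) by (apply (p_le n p Hp); lia). lra.
  - assert (p (S j) <= p i) by (apply (p_le n p Hp); lia). lra.
Qed.

Lemma pk_inI n p k : is_partition n p -> (k < n)%nat -> inI (p k).
Proof.
  intros Hp Hk. pose proof Hp as [H0 [H1 H2]]. unfold inI. split.
  - rewrite <- H0. apply (p_le n p Hp); lia.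
  - rewrite <- H1. apply (p_incr n p Hp); lia.
Qed.

Lemma pk_in_Ik n p k : is_partition n p -> (k < n)%nat -> inIk p k (p k).
Proof. intros [_ [_ H2]] Hk. unfold inIk. specialize (H2 k Hk). lra. Qed.

Definition leftpt (A : R -> Prop) (y d : R) : Prop :=
  -1 < y < 1 /\ ~ A y /\ 0 < d /\ (forall z, y - d <= z < y -> A z).
Definition rightpt (A : R -> Prop) (y d : R) : Prop :=
  inI y /\ ~ A y /\ 0 < d /\ (forall z, y < z < y + d -> A z).


Lemma iet_f_inI n p f : is_IET n p f -> forall x, inI x -> inI (f x).
Proof. intros H. apply H. Qed.
Lemma iet_f_inj n p f : is_IET n p f -> forall x y, inI x -> inI y -> f x = f y -> x = y.
Proof. intros H. apply H. Qed.
Lemma iet_part n p f : is_IET n p f -> is_partition n p.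
Proof. intros H. apply H. Qed.
Lemma iet_n n p f : is_IET n p f -> (2 <= n)%nat.
Proof. intros H. apply H. Qed.
Lemma iet_trans n p f : is_IET n p f -> forall k, (k < n)%nat -> exists t, forall x, inIk p k x -> f x = x + t.
Proof. intros H. apply H. Qed.

Lemma iter_inI n p f : is_IET n p f -> forall m x, inI x -> inI (Nat.iter m f x).
Proof. intros H m; induction m; intros x Hx; simpl; auto. apply (iet_f_inI n p f H); auto. Qed.

Lemma iter_inj n p f : is_IET n p f -> forall m x y, inI x -> inI y ->
  Nat.iter m f x = Nat.iter m f y -> x = y.
Proof.
  intros H m; induction m; intros x y Hx Hy E; simpl in E; auto.
  apply IHm; auto. apply (iet_f_inj n p f H); auto; apply (iter_inI n p f H); auto.
Qed.

Definition ginv (f : R -> R) (y : R) : R := epsilon (inhabits 0) (fun x => inI x /\ f x = y).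

Lemma ginv_spec n p f : is_IET n p f -> forall y, inI y -> inI (ginv f y) /\ f (ginv f y) = y.
Proof.
  intros H y Hy. unfold ginv. apply epsilon_spec.
  destruct H as [_ [_ [_ [_ [Hs _]]]]]. apply Hs; auto.
Qed.

Lemma ginv_f n p f : is_IET n p f -> forall z, inI z -> ginv f (f z) = z.
Proof.
  intros H z Hz. destruct (ginv_spec n p f H (f z)) as [A B]; [apply (iet_f_inI n p f H); auto|].
  apply (iet_f_inj n p f H); auto.
Qed.

Lemma iter_fg n p f : is_IET n p f -> forall k y, inI y ->
  Nat.iter k f (Nat.iter k (ginv f) y) = y /\ inI (Nat.iter k (ginv f) y).
Proof.
  intros H k; induction k as [|k IH]; intros y Hy; [simpl; auto|].
  destruct (IH y Hy) as [E Hin].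
  destruct (ginv_spec n p f H _ Hin) as [G1 G2].
  rewrite Nat.iter_succ_r. rewrite (iter_S (ginv f)). rewrite G2. auto.
Qed.

Lemma FStep n p f : is_IET n p f -> forall y d, -1 < y < 1 -> ~ In y (Pl n p) -> 0 < d -> -1 <= y - d ->
  exists d', 0 < d' <= d /\ (d' = d \/ exists b, In b (Pl n p) /\ y - d < b < y) /\
    exists t, forall u, y - d' <= u <= y -> f u = u + t.
Proof.
  intros H y d Hy Hn Hd Hyd. pose proof (iet_part n p f H) as Hp. pose proof (iet_n n p f H) as H2.
  destruct (find_int n p y Hp ltac:(unfold inI; lra)) as [k [Hk [Hk1 Hk2]]].
  destruct (iet_trans n p f H k Hk) as [t Ht].
  assert (Hpk : p k < y).
  { destruct Hk1 as [|E]; auto. exfalso. destruct k.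
    - destruct Hp as [H0 _]. lra.
    - apply Hn. apply InPl; [lia|]. exists (S k); split; auto; lia. }
  destruct (Rle_dec (p k) (y - d)) as [Hle|Hgt].
  - exists d. split; [lra|]. split; [auto|]. exists t. intros u Hu. apply Ht. unfold inIk; lra.
  - exists (y - p k). split; [lra|]. split.
    + right. exists (p k). split; [|lra]. apply InPl; [lia|]. exists k. split; auto.
      destruct k; [destruct Hp as [H0 _]; lra| lia].
    + exists t. intros u Hu. apply Ht. unfold inIk; lra.
Qed.

Lemma GStep n p f : is_IET n p f -> forall y d, -1 < y < 1 -> ~ In y (Ql n p f) -> 0 < d -> -1 <= y - d ->
  exists d', 0 < d' <= d /\ (d' = d \/ exists b, In b (Ql n p f) /\ y - d < b < y) /\
    exists t, forall u, y - d' <= u <= y -> ginv f u = u + t.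
Proof.
  intros H y d Hy Hn Hd Hyd. pose proof (iet_part n p f H) as Hp.
  destruct (ginv_spec n p f H y ltac:(unfold inI; lra)) as [Gz Gf].
  set (z := ginv f y) in *.
  destruct (find_int n p z Hp Gz) as [k [Hk [Hk1 Hk2]]].
  destruct (iet_trans n p f H k Hk) as [t Ht].
  assert (Hfz : f z = z + t) by (apply Ht; split; auto).
  assert (Hfp : f (p k) = p k + t) by (apply Ht; apply (pk_in_Ik n p k Hp Hk)).
  assert (HQ : In (f (p k)) (Ql n p f)) by (apply InQl; eauto).
  assert (Hlt : f (p k) < y).
  { destruct Hk1 as [Hl|E].
    - lra.
    - exfalso. apply Hn. rewrite <- Gf, <- E. auto. }
  assert (Htr : forall u, f (p k) <= u <= y -> ginv f u = u + - t).
  { intros u Hu. assert (Hin : inIk p k (u - t)) by (unfold inIk; lra).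
    assert (E : f (u - t) = u) by (rewrite (Ht _ Hin); ring).
    rewrite <- E at 1. rewrite (ginv_f n p f H).
    - ring.
    - pose proof (pk_inI n p k Hp Hk). pose proof (pk_inI n p (S k)).
      destruct Hp as [Hp0 [Hp1 Hp2]].
      assert (p (S k) <= 1) by (rewrite <- Hp1; apply (p_le n p ltac:(split; auto)); lia).
      unfold inI in *; unfold inIk in Hin; lra. }
  destruct (Rle_dec (f (p k)) (y - d)) as [Hle|Hgt].
  - exists d. split; [lra|]. split; [auto|]. exists (-t). intros u Hu. apply Htr. lra.
  - exists (y - f (p k)). split; [lra|]. split.
    + right. exists (f (p k)). split; auto; lra.
    + exists (-t). intros u Hu. apply Htr. lra.
Qed.

Lemma RightTrans n p f : is_IET n p f -> forall y d, inI y -> 0 < d -> y + d <= 1 ->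
  exists d', 0 < d' <= d /\ (d' = d \/ exists b, In b (Pl n p) /\ y < b < y + d) /\
    exists t, forall u, y <= u < y + d' -> f u = u + t.
Proof.
  intros H y d Hy Hd Hyd. pose proof (iet_part n p f H) as Hp. pose proof (iet_n n p f H) as H2.
  destruct (find_int n p y Hp Hy) as [k [Hk [Hk1 Hk2]]].
  destruct (iet_trans n p f H k Hk) as [t Ht].
  destruct (Rle_dec (y + d) (p (S k))) as [Hle|Hgt].
  - exists d. split; [lra|]. split; [auto|]. exists t. intros u Hu. apply Ht. unfold inIk; lra.
  - exists (p (S k) - y). split; [lra|]. split.
    + right. exists (p (S k)). split; [|lra]. apply InPl; [lia|]. exists (S k). split; auto.
      split; [lia|]. destruct (Nat.eq_dec (S k) n) as [E|]; [|lia].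
      exfalso. destruct Hp as [_ [H1 _]]. rewrite E, H1 in Hgt. lra.
    + exists t. intros u Hu. apply Ht. unfold inIk; lra.
Qed.

Lemma RightTrans1 n p f : is_IET n p f -> forall y, inI y ->
  exists e, 0 < e /\ y + e <= 1 /\ exists t, forall u, y <= u < y + e -> f u = u + t.
Proof.
  intros H y Hy. destruct (RightTrans n p f H y (1 - y) Hy) as [d' [Hd' [_ [t Ht]]]];
    [unfold inI in Hy; lra| lra|].
  exists d'. split; [lra|]. split; [lra|]. eauto.
Qed.

Definition StepProp (h : R -> R) (bs : list R) : Prop :=
  forall y d, -1 < y < 1 -> ~ In y bs -> 0 < d -> -1 <= y - d ->
  exists d', 0 < d' <= d /\ (d' = d \/ exists b, In b bs /\ y - d < b < y) /\
    exists t, forall u, y - d' <= u <= y -> h u = u + t.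

Lemma LStepGen (h : R -> R) bs (A : R -> Prop) :
  (forall z, inI z -> inI (h z)) -> StepProp h bs ->
  (forall z, A z -> inI z) -> (forall z, inI z -> (A z <-> A (h z))) ->
  forall y d, leftpt A y d -> ~ In y bs ->
  exists d', 0 < d' <= d /\ (d' = d \/ exists b, In b bs /\ y - d < b < y) /\ leftpt A (h y) d'.
Proof.
  intros Hh HS AI Ainv y d [Hy [HnA [Hd Hseg]]] Hn.
  assert (Hyd : -1 <= y - d) by (destruct (AI (y - d)) as [? _]; [apply Hseg; lra| lra]).
  destruct (HS y d Hy Hn Hd Hyd) as [d' [Hd' [Hor [t Ht]]]].
  exists d'. split; auto. split; auto.
  assert (Hyi : inI y) by (unfold inI; lra).
  assert (Hhy : h y = y + t) by (apply Ht; lra).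
  assert (Hseg' : forall z, h y - d' <= z < h y -> A z).
  { intros z Hz. assert (E : h (z - t) = z) by (rewrite Ht; [ring| lra]).
    rewrite <- E at 1. assert (A (z - t)) by (apply Hseg; lra).
    apply (proj1 (Ainv (z - t) (AI _ H))); exact H. }
  assert (HA1 := Hseg' (h y - d') ltac:(lra)). apply AI in HA1.
  pose proof (Hh y Hyi) as Hhi.
  unfold leftpt. unfold inI in *. split; [lra|]. split.
  - intros HA. apply HnA. apply Ainv; auto.
  - split; [lra|auto].
Qed.

Definition NPh (h : R -> R) (y : R) : Prop :=
  forall i j, (i < j)%nat -> Nat.iter i h y <> Nat.iter j h y.

Lemma ChainGen (h : R -> R) bs (A : R -> Prop) :
  (forall z, inI z -> inI (h z)) -> StepProp h bs ->
  (forall z, A z -> inI z) -> (forall z, inI z -> (A z <-> A (h z))) ->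
  forall y d, NPh h y -> leftpt A y d ->
  exists j, In (Nat.iter j h y) bs /\ (forall i, (i < j)%nat -> ~ In (Nat.iter i h y) bs) /\
    (forall i, (i <= j)%nat -> exists d, leftpt A (Nat.iter i h y) d).
Proof.
  intros Hh HS AI Ainv y d Hnp Hl.
  pose proof (LStepGen h bs A Hh HS AI Ainv) as Step.
  assert (Hex : exists j, In (Nat.iter j h y) bs).
  { apply NNPP. intros Hno.
    assert (Hno' : forall j, ~ In (Nat.iter j h y) bs) by (intros j Hj; apply Hno; eauto).
    assert (Hnx : forall yy dd, exists d', (leftpt A yy dd /\ ~ In yy bs) ->
      (0 < d' <= dd /\ (d' = dd \/ exists b, In b bs /\ yy - dd < b < yy) /\ leftpt A (h yy) d')).
    { intros yy dd. destruct (classic (leftpt A yy dd /\ ~ In yy bs)) as [[H1 H2]|Hc].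
      - destruct (Step yy dd H1 H2) as [d' Hd']. exists d'. intros _. exact Hd'.
      - exists 0. intros Hc'. contradiction. }
    set (nx := fun yy dd => epsilon (inhabits 0) (fun d' => (leftpt A yy dd /\ ~ In yy bs) ->
      (0 < d' <= dd /\ (d' = dd \/ exists b, In b bs /\ yy - dd < b < yy) /\ leftpt A (h yy) d'))).
    assert (Hnxs : forall yy dd, leftpt A yy dd -> ~ In yy bs ->
      0 < nx yy dd <= dd /\ (nx yy dd = dd \/ exists b, In b bs /\ yy - dd < b < yy) /\ leftpt A (h yy) (nx yy dd)).
    { intros yy dd H1 H2. unfold nx. apply (epsilon_spec (inhabits 0) _ (Hnx yy dd)). auto. }
    set (ys := fun j => Nat.iter j h y).
    set (ds := fix ds (j : nat) : R := match j with O => d | S j' => nx (ys j') (ds j') end).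
    assert (Hall : forall j, leftpt A (ys j) (ds j)).
    { induction j as [|j IH]; [exact Hl|].
      simpl. destruct (Hnxs (ys j) (ds j) IH (Hno' j)) as [_ [_ H3]]. exact H3. }
    apply (core ys ds bs (fun j b => ys j - ds j < b < ys j)).
    - intros j. apply Hall.
    - intros j. destruct (Hall j) as [H1 _]. lra.
    - intros j. destruct (Hnxs (ys j) (ds j) (Hall j) (Hno' j)) as [_ [H2 _]]. exact H2.
    - intros i j b Hi Hj. destruct (Nat.eq_dec i j) as [|Hne]; auto. exfalso.
      assert (Hne' : ys i <> ys j).
      { destruct (Nat.lt_gt_cases i j) as [[Hij|Hij] _]; auto.
        - apply Hnp; auto.
        - intros E; apply (Hnp j i Hij); auto. }
      destruct (Hall i) as [_ [Ai [_ Si]]]. destruct (Hall j) as [_ [Aj [_ Sj]]].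
      destruct (Rlt_le_dec (ys i) (ys j)) as [Hlt|Hle].
      + apply Ai. apply Sj. lra.
      + destruct Hle as [Hlt|E]; [|exfalso; apply Hne'; symmetry; auto]. apply Aj. apply Si. lra.
    - intros i j Hne.
      assert (Hne' : ys i <> ys j).
      { destruct (Nat.lt_gt_cases i j) as [[Hij|Hij] _]; auto.
        - apply Hnp; auto.
        - intros E; apply (Hnp j i Hij); auto. }
      destruct (Hall i) as [_ [Ai [Di Si]]]. destruct (Hall j) as [_ [Aj [Dj Sj]]].
      destruct (Rlt_le_dec (ys i) (ys j)) as [Hlt|Hle].
      + assert (ys i < ys j - ds j) by (apply Rnot_le_lt; intros Hc; apply Ai; apply Sj; lra).
        rewrite Rabs_minus_sym, Rabs_right by lra.
        apply Rle_trans with (ds j); [apply Rmin_r| lra].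
      + destruct Hle as [Hlt|E]; [|exfalso; apply Hne'; symmetry; auto].
        assert (ys j < ys i - ds i) by (apply Rnot_le_lt; intros Hc; apply Aj; apply Si; lra).
        rewrite Rabs_right by lra.
        apply Rle_trans with (ds i); [apply Rmin_l| lra]. }
  destruct (least_ex _ Hex) as [j [Hj Hmin]].
  exists j. split; auto. split; auto.
  induction i as [|i IH]; intros Hi.
  - exists d; exact Hl.
  - destruct (IH ltac:(lia)) as [d0 H0].
    destruct (Step _ _ H0 (Hmin i ltac:(lia))) as [d' [_ [_ H3]]].
    exists d'. exact H3.
Qed.

Lemma RStep n p f (A : R -> Prop) : is_IET n p f ->
  (forall z, A z -> inI z) -> (forall z, inI z -> (A z <-> A (f z))) ->
  forall y d, rightpt A y d ->
  exists d', 0 < d' <= d /\ (d' = d \/ exists b, In b (Pl n p) /\ y < b < y + d) /\ rightpt A (f y) d'.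
Proof.
  intros H AI Ainv y d [Hy [HnA [Hd Hseg]]].
  assert (Hyd : y + d <= 1).
  { apply Rnot_lt_le. intros Hc. assert (A 1) by (apply Hseg; unfold inI in Hy; lra).
    apply AI in H0. unfold inI in H0; lra. }
  destruct (RightTrans n p f H y d Hy Hd Hyd) as [d' [Hd' [Hor [t Ht]]]].
  exists d'. split; auto. split; auto.
  assert (Hfy : f y = y + t) by (apply Ht; lra).
  unfold rightpt. split; [apply (iet_f_inI n p f H); auto|]. split.
  - intros HA. apply HnA. apply Ainv; auto.
  - split; [lra|]. intros z Hz.
    assert (E : f (z - t) = z) by (rewrite Ht; [ring| lra]).
    assert (HA : A (z - t)) by (apply Hseg; lra).
    rewrite <- E at 1. apply (proj1 (Ainv (z - t) (AI _ HA))); exact HA.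
Qed.

Lemma RightNone n p f (A : R -> Prop) : is_IET n p f ->
  (forall z, A z -> inI z) -> (forall z, inI z -> (A z <-> A (f z))) ->
  forall y d, NPh f y -> ~ rightpt A y d.
Proof.
  intros H AI Ainv y d Hnp Hr.
  pose proof (RStep n p f A H AI Ainv) as Step.
  assert (Hnx : forall yy dd, exists d', rightpt A yy dd ->
      (0 < d' <= dd /\ (d' = dd \/ exists b, In b (Pl n p) /\ yy < b < yy + dd) /\ rightpt A (f yy) d')).
  { intros yy dd. destruct (classic (rightpt A yy dd)) as [H1|Hc].
    - destruct (Step yy dd H1) as [d' Hd']. exists d'. intros _. exact Hd'.
    - exists 0. intros Hc'. contradiction. }
  set (nx := fun yy dd => epsilon (inhabits 0) (fun d' => rightpt A yy dd ->
      (0 < d' <= dd /\ (d' = dd \/ exists b, In b (Pl n p) /\ yy < b < yy + dd) /\ rightpt A (f yy) d'))).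
  assert (Hnxs : forall yy dd, rightpt A yy dd ->
      0 < nx yy dd <= dd /\ (nx yy dd = dd \/ exists b, In b (Pl n p) /\ yy < b < yy + dd) /\ rightpt A (f yy) (nx yy dd)).
  { intros yy dd H1. unfold nx. apply (epsilon_spec (inhabits 0) _ (Hnx yy dd)). auto. }
  set (ys := fun j => Nat.iter j f y).
  set (ds := fix ds (j : nat) : R := match j with O => d | S j' => nx (ys j') (ds j') end).
  assert (Hall : forall j, rightpt A (ys j) (ds j)).
  { induction j as [|j IH]; [exact Hr|].
    simpl. destruct (Hnxs (ys j) (ds j) IH) as [_ [_ H3]]. exact H3. }
  apply (core ys ds (Pl n p) (fun j b => ys j < b < ys j + ds j)).
  - intros j. apply Hall.
  - intros j. destruct (Hall j) as [H1 _]. unfold inI in H1. lra.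
  - intros j. destruct (Hnxs (ys j) (ds j) (Hall j)) as [_ [H2 _]]. exact H2.
  - intros i j b Hi Hj. destruct (Nat.eq_dec i j) as [|Hne]; auto. exfalso.
    assert (Hne' : ys i <> ys j).
    { destruct (Nat.lt_gt_cases i j) as [[Hij|Hij] _]; auto.
      - apply Hnp; auto.
      - intros E; apply (Hnp j i Hij); auto. }
    destruct (Hall i) as [_ [Ai [_ Si]]]. destruct (Hall j) as [_ [Aj [_ Sj]]].
    destruct (Rlt_le_dec (ys i) (ys j)) as [Hlt|Hle].
    + apply Aj. apply Si. lra.
    + destruct Hle as [Hlt|E]; [|exfalso; apply Hne'; symmetry; auto]. apply Ai. apply Sj. lra.
  - intros i j Hne.
    assert (Hne' : ys i <> ys j).
    { destruct (Nat.lt_gt_cases i j) as [[Hij|Hij] _]; auto.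
      - apply Hnp; auto.
      - intros E; apply (Hnp j i Hij); auto. }
    destruct (Hall i) as [_ [Ai [Di Si]]]. destruct (Hall j) as [_ [Aj [Dj Sj]]].
    destruct (Rlt_le_dec (ys i) (ys j)) as [Hlt|Hle].
    + assert (ys i + ds i <= ys j) by (apply Rnot_lt_le; intros Hc; apply Aj; apply Si; lra).
      rewrite Rabs_minus_sym, Rabs_right by lra.
      apply Rle_trans with (ds i); [apply Rmin_l| lra].
    + destruct Hle as [Hlt|E]; [|exfalso; apply Hne'; symmetry; auto].
      assert (ys j + ds j <= ys i) by (apply Rnot_lt_le; intros Hc; apply Ai; apply Sj; lra).
      rewrite Rabs_right by lra.
      apply Rle_trans with (ds j); [apply Rmin_r| lra].
Qed.

Lemma zero_part n p f : is_IET n p f -> billiard_like n p f ->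
  exists k0, (1 <= k0 < n)%nat /\ p k0 = 0.
Proof.
  intros H [Hb1 _]. pose proof (iet_part n p f H) as Hp.
  destruct (find_int n p 0 Hp ltac:(unfold inI; lra)) as [k [Hk Hk']].
  exists k. destruct (Hb1 k Hk) as [L|Rr].
  - apply L in Hk'. unfold in_left in Hk'. lra.
  - pose proof (Rr (p k) (pk_in_Ik n p k Hp Hk)) as Hr. unfold in_right in Hr.
    destruct Hk' as [Hk1 _]. split; [|lra].
    destruct k; [destruct Hp as [H0 _]; lra| lia].
Qed.

Lemma zero_img n p f : is_IET n p f -> billiard_like n p f ->
  exists a0, (a0 < n)%nat /\ f (p a0) = 0.
Proof.
  intros H [_ [Hb2 _]]. pose proof (iet_part n p f H) as Hp.
  pose proof H as [Hn [_ [Hf1 [Hf2 [Hs Ht]]]]].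
  destruct (Hs 0 ltac:(unfold inI; lra)) as [z [Hz Hfz]].
  destruct (find_int n p z Hp Hz) as [k [Hk Hk']].
  exists k. split; auto.
  destruct (Ht k Hk) as [t Htk].
  destruct Hk' as [[Hlt|E] Hk2].
  - exfalso. destruct (Hb2 k Hk) as [L|Rr].
    + assert (in_left (f z)) by (apply L; split; lra). rewrite Hfz in H0. unfold in_left in H0; lra.
    + pose proof (Rr (p k) (pk_in_Ik n p k Hp Hk)) as Hr. unfold in_right in Hr.
      rewrite (Htk (p k) (pk_in_Ik n p k Hp Hk)) in Hr.
      rewrite (Htk z) in Hfz by (split; lra). lra.
  - rewrite E; auto.
Qed.

Lemma pos_part n p f : is_IET n p f -> billiard_like n p f ->
  exists kr, (1 <= kr < n)%nat /\ 0 < p kr.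
Proof.
  intros H [_ [_ [_ [k1 [k2 [H1 [H2 [Hne [R1 R2]]]]]]]]]. pose proof (iet_part n p f H) as Hp.
  pose proof (R1 _ (pk_in_Ik n p k1 Hp H1)) as P1. pose proof (R2 _ (pk_in_Ik n p k2 Hp H2)) as P2.
  unfold in_right in *.
  destruct (Nat.lt_gt_cases k1 k2) as [[Hl|Hl] _]; auto.
  - exists k2. split; [lia|]. pose proof (p_incr n p Hp k1 k2 Hl ltac:(lia)). lra.
  - exists k1. split; [lia|]. pose proof (p_incr n p Hp k2 k1 Hl ltac:(lia)). lra.
Qed.

Lemma keane0 n p f : is_IET n p f -> modified_keane n p f ->
  forall m a b, (1 <= m)%nat -> (a < n)%nat -> (1 <= b < n)%nat ->
  Nat.iter m f (p a) = p b -> p b = 0.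
Proof.
  intros H HK m a b Hm Ha Hb E. apply NNPP. intros Hz.
  apply (HK m a b Hm Ha ltac:(lia)); auto.
  pose proof (p_incr n p (iet_part n p f H) 0 b ltac:(lia) ltac:(lia)).
  destruct (iet_part n p f H) as [Hq0 _]. lra.
Qed.

Lemma Ending n p f a0 : is_IET n p f -> (a0 < n)%nat -> f (p a0) = 0 ->
  forall y j, (forall i, (i <= j)%nat -> -1 < Nat.iter i f y < 1) ->
  (forall i, (i < j)%nat -> ~ In (Nat.iter i f y) (Pl n p)) -> Nat.iter j f y = 0 -> j = 0%nat.
Proof.
  intros H Ha0 Hf0 y j Hb Hn E. destruct j as [|j]; auto. exfalso.
  rewrite iter_S in E. pose proof (Hb j ltac:(lia)) as Hj.
  assert (Eu : Nat.iter j f y = p a0).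
  { apply (iet_f_inj n p f H); [unfold inI; lra| apply (pk_inI n p a0 (iet_part n p f H) Ha0)|].
    rewrite E, Hf0; auto. }
  destruct a0.
  - destruct (iet_part n p f H) as [H0 _]. lra.
  - apply (Hn j ltac:(lia)). rewrite Eu. apply InPl; [pose proof (iet_n n p f H); lia|].
    exists (S a0). split; auto; lia.
Qed.

Definition NPer (f : R -> R) (y : R) : Prop := forall m, (1 <= m)%nat -> Nat.iter m f y <> y.

Lemma NPf n p f : is_IET n p f -> forall y, inI y -> NPer f y -> NPh f y.
Proof.
  intros H y Hy Hnp i j Hij E. apply (Hnp (j - i)%nat ltac:(lia)).
  replace j with (i + (j - i))%nat in E by lia.
  rewrite Nat.iter_add in E.
  symmetry. apply (iter_inj n p f H i); auto; apply (iter_inI n p f H); auto.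
Qed.

Lemma NPg n p f : is_IET n p f -> forall y, inI y -> NPer f y -> NPh (ginv f) y.
Proof.
  intros H y Hy Hnp i j Hij E. apply (Hnp (j - i)%nat ltac:(lia)).
  destruct (iter_fg n p f H j y Hy) as [Ej _].
  destruct (iter_fg n p f H i y Hy) as [Ei _].
  rewrite <- E in Ej.
  replace j with ((j - i) + i)%nat in Ej by lia.
  rewrite Nat.iter_add, Ei in Ej. exact Ej.
Qed.

Lemma ginv_inI n p f : is_IET n p f -> forall z, inI z -> inI (ginv f z).
Proof. intros H z Hz. apply (ginv_spec n p f H z Hz). Qed.

Lemma LeftZero n p f : is_IET n p f -> modified_keane n p f -> billiard_like n p f ->
  forall (A : R -> Prop), (forall z, A z -> inI z) -> (forall z, inI z -> (A z <-> A (f z))) ->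
  forall y d, NPer f y -> leftpt A y d -> y = 0.
Proof.
  intros H HK Hb A AI Ainv y d Hnp Hl.
  assert (Hy : inI y) by (destruct Hl as [? _]; unfold inI; lra).
  assert (Hn2 := iet_n n p f H).
  destruct (ChainGen f (Pl n p) A (iet_f_inI n p f H) (FStep n p f H) AI Ainv y d
    (NPf n p f H y Hy Hnp) Hl) as [j [Hj [Hjmin Hjl]]].
  assert (Ainvg : forall z, inI z -> (A z <-> A (ginv f z))).
  { intros z Hz. destruct (ginv_spec n p f H z Hz) as [G1 G2].
    rewrite (Ainv _ G1), G2. tauto. }
  destruct (ChainGen (ginv f) (Ql n p f) A (ginv_inI n p f H) (GStep n p f H) AI Ainvg y d
    (NPg n p f H y Hy Hnp) Hl) as [i [Hi _]].
  apply InQl in Hi. destruct Hi as [a [Ha Ea]].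
  apply InPl in Hj; [|lia]. destruct Hj as [b [Hb' Eb]].
  destruct (iter_fg n p f H i y Hy) as [Ei _].
  rewrite <- Ea, <- Nat.iter_succ_r in Ei.
  assert (Hc : Nat.iter (j + S i) f (p a) = p b).
  { rewrite Nat.iter_add, Ei. auto. }
  pose proof (keane0 n p f H HK (j + S i)%nat a b ltac:(lia) Ha Hb' Hc) as Hpb.
  destruct (zero_img n p f H Hb) as [a0 [Ha0 Hf0]].
  assert (j = 0%nat).
  { apply (Ending n p f a0 H Ha0 Hf0 y j); auto.
    - intros i0 Hi0. destruct (Hjl i0 Hi0) as [d0 [Hd0 _]]. auto.
    - rewrite <- Eb. auto. }
  subst j. simpl in Eb. lra.
Qed.

Lemma halfcontra n p f : is_IET n p f -> irreducible n p f -> billiard_like n p f ->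
  forall U : R -> Prop, (forall z, inI z -> (U z <-> z < 0)) ->
  (forall z, inI z -> U z -> U (f z)) -> False.
Proof.
  intros H Hirr Hb U HU Hinv. pose proof (iet_part n p f H) as Hp.
  destruct (zero_part n p f H Hb) as [k0 [Hk0 E0]].
  apply (Hirr k0 ltac:(lia) ltac:(lia)).
  intros x [j [Hj [Hx1 Hx2]]].
  assert (Hpj : p (S j) <= p k0) by (apply (p_le n p Hp); lia).
  assert (Hp0 : p 0%nat <= p j) by (apply (p_le n p Hp); lia).
  destruct Hp as [H0 [H1 H2]].
  assert (Hx : inI x) by (unfold inI; lra).
  assert (Hfx : inI (f x)) by (apply (iet_f_inI n p f H); auto).
  assert (Hu : U (f x)) by (apply Hinv; auto; apply HU; auto; lra).
  apply HU in Hu; auto.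
  destruct (find_int n p (f x) (iet_part n p f H) Hfx) as [k [Hk [Hk1 Hk2]]].
  exists k. split; [|split; auto].
  destruct (Nat.lt_ge_cases k k0) as [|Hge]; auto.
  assert (p k0 <= p k) by (apply (p_le n p (iet_part n p f H)); lia). lra.
Qed.


Lemma Sa (W : R -> Prop) : (forall z, W z -> inI z) ->
  (forall w, W w -> exists e, 0 < e /\ forall u, w <= u < w + e -> W u) ->
  forall w v, W w -> inI v -> ~ W v -> w < v -> exists y d, w < y <= v /\ leftpt W y d.
Proof.
  intros WI RO w v Hw Hv Hnv Hwv.
  set (T := fun z => w <= z <= v /\ forall u, w <= u < z -> W u).
  assert (Hb : bound T) by (exists v; intros z [Hz _]; lra).
  assert (Hne : exists z, T z) by (exists w; split; [lra| intros u Hu; lra]).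
  destruct (completeness T Hb Hne) as [s [Hub Hleast]].
  assert (Hws : w <= s) by (apply Hub; split; [lra| intros u Hu; lra]).
  assert (Hsv : s <= v) by (apply Hleast; intros z [Hz _]; lra).
  assert (HW : forall u, w <= u < s -> W u).
  { intros u Hu. apply NNPP. intros Hnu.
    assert (s <= u).
    { apply Hleast. intros z [Hz Hz']. apply Rnot_lt_le. intros Hc. apply Hnu. apply Hz'. lra. }
    lra. }
  assert (Hws' : w < s).
  { destruct (RO w Hw) as [e [He Hre]].
    assert (T (Rmin (w + e/2) v)).
    { split. - split; [apply Rmin_glb; lra| apply Rmin_r].
      - intros u Hu. apply Hre. split; [lra|]. pose proof (Rmin_l (w + e/2) v). lra. }
    apply Hub in H. apply Rlt_le_trans with (Rmin (w + e/2) v); auto.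
    apply Rmin_glb_lt; lra. }
  assert (Hns : ~ W s).
  { intros Hs. destruct (Rle_lt_or_eq_dec s v Hsv) as [Hlt|E].
    - destruct (RO s Hs) as [e [He Hre]].
      assert (T (Rmin (s + e/2) v)).
      { split. - split; [apply Rmin_glb; lra| apply Rmin_r].
        - intros u Hu. destruct (Rlt_le_dec u s).
          + apply HW; lra.
          + apply Hre. split; [lra|]. pose proof (Rmin_l (s + e/2) v). lra. }
      apply Hub in H. assert (s < Rmin (s + e/2) v) by (apply Rmin_glb_lt; lra). lra.
    - subst s. contradiction. }
  exists s, (s - w). split; [lra|].
  pose proof (WI w Hw). unfold inI in *.
  split; [lra|]. split; auto. split; [lra|]. intros z Hz. apply HW. lra.
Qed.

Lemma Sb (W : R -> Prop) : (forall z, W z -> inI z) ->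
  (forall w, W w -> exists e, 0 < e /\ forall u, w <= u < w + e -> W u) ->
  forall v w, inI v -> ~ W v -> W w -> v < w ->
  (exists y d, v <= y < w /\ rightpt W y d) \/
  (exists y d, v < y <= w /\ leftpt (fun z => inI z /\ ~ W z) y d) \/
  (exists y d, v < y < w /\ leftpt W y d).
Proof.
  intros WI RO v w Hv Hnv Hw Hvw.
  pose proof (WI w Hw) as Hwi.
  set (T := fun z => v <= z <= w /\ ~ W z).
  assert (Hb : bound T) by (exists w; intros z [Hz _]; lra).
  assert (Hne : exists z, T z) by (exists v; split; [lra| auto]).
  destruct (completeness T Hb Hne) as [s [Hub Hleast]].
  assert (Hvs : v <= s) by (apply Hub; split; [lra| auto]).
  assert (Hsw : s <= w) by (apply Hleast; intros z [Hz _]; lra).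
  assert (HW : forall u, s < u <= w -> W u).
  { intros u Hu. apply NNPP. intros Hnu.
    assert (u <= s) by (apply Hub; split; [lra| auto]). lra. }
  destruct (classic (W s)) as [Hs|Hns].
  - assert (Hvs' : v < s) by (destruct Hvs as [|E]; auto; subst; contradiction).
    destruct (classic (exists e, 0 < e /\ forall u, s - e <= u < s -> ~ W u)) as [[e [He He']]|Hno].
    + right; left. exists s, (Rmin e (s - v)).
      split; [lra|]. unfold leftpt, inI in *. split; [lra|]. split; [tauto|].
      split; [apply Rmin_glb_lt; lra|].
      intros z Hz. pose proof (Rmin_l e (s - v)). pose proof (Rmin_r e (s - v)).
      split; [lra|]. apply He'. lra.
    + right; right.
      assert (Hu : exists u, s - (s - v) <= u < s /\ W u).
      { apply NNPP. intros Hc. apply Hno. exists (s - v). split; [lra|].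
        intros u Hu Hwu. apply Hc. exists u. auto. }
      destruct Hu as [u [Hu Hwu]].
      assert (Huv : v < u) by (destruct (Req_dec u v); [subst; contradiction| lra]).
      assert (Hz : exists z, T z /\ u < z).
      { apply NNPP. intros Hc.
        assert (s <= u).
        { apply Hleast. intros z Tz. apply Rnot_lt_le. intros Hlt. apply Hc. eauto. }
        lra. }
      destruct Hz as [z [[Hz1 Hz2] Huz]].
      assert (Hzs : z <= s) by (apply Hub; split; auto).
      assert (Hzs' : z < s) by (destruct Hzs as [|E]; auto; subst; contradiction).
      assert (Hzi : inI z) by (unfold inI in *; lra).
      destruct (Sa W WI RO u z Hwu Hzi Hz2 Huz) as [y [d [Hy Hl]]].
      exists y, d. split; [lra| auto].
  - left. assert (Hsw' : s < w) by (destruct Hsw as [|E]; auto; subst; contradiction).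
    exists s, (w - s). split; [lra|]. unfold rightpt, inI in *.
    split; [lra|]. split; auto. split; [lra|]. intros z Hz. apply HW; lra.
Qed.

Lemma GST n p f : is_IET n p f -> irreducible n p f -> billiard_like n p f ->
  forall W : R -> Prop, (forall z, W z -> inI z) ->
  (forall w, W w -> exists e, 0 < e /\ forall u, w <= u < w + e -> W u) ->
  (forall z, inI z -> (W z <-> W (f z))) ->
  (exists w, W w) -> (exists v, inI v /\ ~ W v) ->
  (forall y d, leftpt W y d -> y = 0) ->
  (forall y d, leftpt (fun z => inI z /\ ~ W z) y d -> y = 0) ->
  (forall y d, ~ rightpt W y d) -> False.
Proof.
  intros H Hirr Hb W WI RO Winv [w0 Hw0] [v0 [Hv0 Hnv0]] hLW hLV hRW.
  assert (H0 : (exists d, leftpt W 0 d) \/ (exists d, leftpt (fun z => inI z /\ ~ W z) 0 d)).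
  { destruct (Rlt_le_dec w0 v0) as [Hlt|Hle].
    - destruct (Sa W WI RO w0 v0 Hw0 Hv0 Hnv0 Hlt) as [y [d [_ Hl]]].
      left. exists d. rewrite <- (hLW y d Hl). auto.
    - assert (Hlt : v0 < w0) by (destruct Hle as [|E]; auto; subst; contradiction).
      destruct (Sb W WI RO v0 w0 Hv0 Hnv0 Hw0 Hlt) as [[y [d [_ Hr]]]|[[y [d [_ Hl]]]|[y [d [_ Hl]]]]].
      + exfalso; eapply hRW; eauto.
      + right. exists d. rewrite <- (hLV y d Hl). auto.
      + left. exists d. rewrite <- (hLW y d Hl). auto. }
  assert (I0 : inI 0) by (unfold inI; lra).
  destruct H0 as [[d Hl]|[d Hl]].
  - destruct Hl as [_ [Hn0 [Hd Hseg]]].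
    apply (halfcontra n p f H Hirr Hb W).
    + intros z Hz. split.
      * intros Hwz. apply Rnot_le_lt. intros Hc.
        assert (Hz0 : 0 < z) by (destruct Hc as [|E]; auto; subst; contradiction).
        destruct (Sb W WI RO 0 z I0 Hn0 Hwz Hz0) as [[y [d' [_ Hr]]]|[[y [d' [Hy Hl]]]|[y [d' [Hy Hl]]]]].
        -- eapply hRW; eauto.
        -- pose proof (hLV y d' Hl). lra.
        -- pose proof (hLW y d' Hl). lra.
      * intros Hz0. apply NNPP. intros Hnz.
        destruct (Rlt_le_dec z (-d)) as [Hlt|Hge]; [|apply Hnz; apply Hseg; lra].
        assert (Hw : W (-d/2)) by (apply Hseg; lra).
        destruct (Sb W WI RO z (-d/2) Hz Hnz Hw ltac:(lra)) as [[y [d' [_ Hr]]]|[[y [d' [Hy Hl]]]|[y [d' [Hy Hl]]]]].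
        -- eapply hRW; eauto.
        -- pose proof (hLV y d' Hl). lra.
        -- pose proof (hLW y d' Hl). lra.
    + intros z Hz Hwz. apply (proj1 (Winv z Hz)); auto.
  - destruct Hl as [_ [Hn0 [Hd Hseg]]].
    assert (Hw0' : W 0) by (apply NNPP; intros Hc; apply Hn0; split; auto).
    apply (halfcontra n p f H Hirr Hb (fun z => inI z /\ ~ W z)).
    + intros z Hz. split.
      * intros [_ Hnz]. apply Rnot_le_lt. intros Hc.
        assert (Hz0 : 0 < z) by (destruct Hc as [|E]; auto; subst; contradiction).
        destruct (Sa W WI RO 0 z Hw0' Hz Hnz Hz0) as [y [d' [Hy Hl]]].
        pose proof (hLW y d' Hl). lra.
      * intros Hz0. split; auto. intros Hwz.
        destruct (Rlt_le_dec z (-d)) as [Hlt|Hge]; [|apply (Hseg z); [lra| auto]].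
        assert (Hv : inI (-d/2) /\ ~ W (-d/2)) by (apply Hseg; lra).
        destruct Hv as [Hv1 Hv2].
        destruct (Sa W WI RO z (-d/2) Hwz Hv1 Hv2 ltac:(lra)) as [y [d' [Hy Hl]]].
        pose proof (hLW y d' Hl). lra.
    + intros z Hz [_ Hnz]. split; [apply (iet_f_inI n p f H); auto|].
      intros Hc. apply Hnz. apply Winv; auto.
Qed.

Definition Per (f : R -> R) (z : R) : Prop := inI z /\ exists m, (1 <= m)%nat /\ Nat.iter m f z = z.

Lemma PerInv n p f : is_IET n p f -> forall z, inI z -> (Per f z <-> Per f (f z)).
Proof.
  intros H z Hz. split.
  - intros [_ [m [Hm E]]]. split; [apply (iet_f_inI n p f H); auto|].
    exists m. split; auto. rewrite <- Nat.iter_succ_r, iter_S, E. auto.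
  - intros [_ [m [Hm E]]]. split; auto. exists m. split; auto.
    rewrite <- Nat.iter_succ_r, iter_S in E.
    apply (iet_f_inj n p f H); auto. apply (iter_inI n p f H); auto.
Qed.

Lemma LT_iter n p f : is_IET n p f -> forall m y,
  (forall i, (i < m)%nat -> -1 < Nat.iter i f y < 1 /\ ~ In (Nat.iter i f y) (Pl n p)) ->
  exists e, 0 < e /\ forall z, y - e <= z <= y -> Nat.iter m f z = z + (Nat.iter m f y - y).
Proof.
  intros H m; induction m as [|m IH]; intros y Hi.
  - exists 1. split; [lra|]. intros z _. simpl. ring.
  - destruct (IH y (fun i Hi' => Hi i ltac:(lia))) as [e1 [He1 Ht1]].
    destruct (Hi m ltac:(lia)) as [Hym Hnm].
    set (ym := Nat.iter m f y) in *.
    destruct (FStep n p f H ym (ym + 1) Hym Hnm ltac:(lra) ltac:(lra)) as [d' [Hd' [_ [t Ht]]]].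
    exists (Rmin e1 d'). split; [apply Rmin_glb_lt; lra|].
    intros z Hz. pose proof (Rmin_l e1 d'). pose proof (Rmin_r e1 d').
    rewrite !iter_S. rewrite (Ht1 z) by lra. fold ym.
    rewrite (Ht (z + (ym - y))) by lra. rewrite (Ht ym) by lra. ring.
Qed.

Lemma RT_iter n p f : is_IET n p f -> forall m y, inI y ->
  exists e, 0 < e /\ exists t, forall z, y <= z < y + e -> Nat.iter m f z = z + t.
Proof.
  intros H m; induction m as [|m IH]; intros y Hy.
  - exists 1. split; [lra|]. exists 0. intros z _. simpl. ring.
  - destruct (IH y Hy) as [e1 [He1 [t1 Ht1]]].
    assert (Hym : inI (Nat.iter m f y)) by (apply (iter_inI n p f H); auto).
    destruct (RightTrans1 n p f H _ Hym) as [e2 [He2 [_ [t2 Ht2]]]].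
    assert (Ey : Nat.iter m f y = y + t1) by (apply Ht1; lra).
    exists (Rmin e1 e2). split; [apply Rmin_glb_lt; lra|]. exists (t1 + t2).
    intros z Hz. pose proof (Rmin_l e1 e2). pose proof (Rmin_r e1 e2).
    rewrite iter_S, (Ht1 z) by lra. rewrite Ht2 by lra. ring.
Qed.

Lemma PerLV n p f : is_IET n p f -> modified_keane n p f -> billiard_like n p f ->
  forall y m d, inI y -> (1 <= m)%nat -> Nat.iter m f y = y ->
  leftpt (fun z => inI z /\ ~ Per f z) y d -> y = 0.
Proof.
  intros H HK Hb y m d Hy Hm Em Hl.
  set (V := fun z => inI z /\ ~ Per f z) in *.
  assert (VI : forall z, V z -> inI z) by (intros z [? _]; auto).
  assert (Vinv : forall z, inI z -> (V z <-> V (f z))).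
  { intros z Hz. unfold V. rewrite (PerInv n p f H z Hz).
    split; intros [A1 A2]; split; auto; apply (iet_f_inI n p f H); auto. }
  pose proof (LStepGen f (Pl n p) V (iet_f_inI n p f H) (FStep n p f H) VI Vinv) as Step.
  assert (Hprop : forall j, (forall i, (i < j)%nat -> ~ In (Nat.iter i f y) (Pl n p)) ->
    forall i, (i <= j)%nat -> exists d0, leftpt V (Nat.iter i f y) d0).
  { intros j Hj i. induction i as [|i IH]; intros Hi.
    - exists d. exact Hl.
    - destruct (IH ltac:(lia)) as [d0 H0].
      destruct (Step _ _ H0 (Hj i ltac:(lia))) as [d' [_ [_ H3]]]. exists d'; exact H3. }
  assert (Hex : exists i, (i < m)%nat /\ In (Nat.iter i f y) (Pl n p)).
  { apply NNPP. intros Hno.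
    assert (Hno' : forall i, (i < m)%nat -> ~ In (Nat.iter i f y) (Pl n p)) by (intros i Hi Hin; apply Hno; eauto).
    destruct (LT_iter n p f H m y) as [e [He Ht]].
    { intros i Hi. split; auto. destruct (Hprop m Hno' i ltac:(lia)) as [d0 [Hd0 _]]. auto. }
    destruct Hl as [_ [_ [Hd Hseg]]].
    set (u := y - Rmin e d).
    assert (Hu : V u) by (apply Hseg; unfold u; pose proof (Rmin_r e d); pose proof (Rmin_glb_lt e d 0); lra).
    destruct Hu as [Hu1 Hu2]. apply Hu2. split; auto. exists m. split; auto.
    rewrite Ht; [rewrite Em; ring|]. unfold u. pose proof (Rmin_l e d). pose proof (Rmin_glb_lt e d 0). lra. }
  destruct (least_ex _ Hex) as [j [[Hjm Hj] Hmin]].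
  assert (Hmin' : forall i, (i < j)%nat -> ~ In (Nat.iter i f y) (Pl n p)).
  { intros i Hi Hin. apply (Hmin i Hi). split; auto; lia. }
  pose proof (Hprop j Hmin') as Hl'.
  assert (Hn2 := iet_n n p f H).
  apply InPl in Hj; [|lia]. destruct Hj as [b [Hb' Eb]].
  assert (Hper : Nat.iter m f (p b) = p b).
  { rewrite Eb, <- Nat.iter_add, Nat.add_comm, Nat.iter_add, Em. auto. }
  pose proof (keane0 n p f H HK m b b Hm ltac:(lia) Hb' Hper) as Hpb.
  destruct (zero_img n p f H Hb) as [a0 [Ha0 Hf0]].
  assert (j = 0%nat).
  { apply (Ending n p f a0 H Ha0 Hf0 y j); auto.
    - intros i0 Hi0. destruct (Hl' i0 Hi0) as [d0 [Hd0 _]]. auto.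
    - rewrite <- Eb. auto. }
  subst j. simpl in Eb. lra.
Qed.

Lemma NoPer n p f : is_IET n p f -> irreducible n p f -> billiard_like n p f -> modified_keane n p f ->
  forall z, inI z -> NPer f z.
Proof.
  intros H Hirr Hb HK z Hz m Hm E.
  apply (GST n p f H Hirr Hb (Per f)).
  - intros w [? _]; auto.
  - intros w [Hw [m' [Hm' E']]].
    destruct (RT_iter n p f H m' w Hw) as [e [He [t Ht]]].
    assert (t = 0) by (pose proof (Ht w ltac:(lra)); lra). subst t.
    exists (Rmin e (1 - w)). split; [apply Rmin_glb_lt; unfold inI in Hw; lra|].
    intros u Hu. pose proof (Rmin_l e (1 - w)). pose proof (Rmin_r e (1 - w)).
    split; [unfold inI in *; lra|]. exists m'. split; auto. rewrite Ht; [ring| lra].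
  - apply (PerInv n p f H).
  - exists z. split; auto. eauto.
  - destruct (pos_part n p f H Hb) as [kr [Hkr Hpk]].
    exists (p kr). split; [apply (pk_inI n p kr (iet_part n p f H)); lia|].
    intros [_ [m' [Hm' E']]]. apply (HK m' kr kr Hm' ltac:(lia) ltac:(lia)); auto; lra.
  - intros y d Hl. apply (LeftZero n p f H HK Hb (Per f) (fun w Hw => proj1 Hw) (PerInv n p f H) y d); auto.
    intros m' Hm' E'. destruct Hl as [Hy [Hn _]]. apply Hn. split; [unfold inI; lra| eauto].
  - intros y d Hl.
    assert (Hy : inI y) by (destruct Hl as [? _]; unfold inI; lra).
    assert (Hp : Per f y) by (apply NNPP; intros Hc; destruct Hl as [_ [Hn _]]; apply Hn; split; auto).
    destruct Hp as [_ [m' [Hm' E']]].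
    apply (PerLV n p f H HK Hb y m' d Hy Hm' E' Hl).
  - intros y d Hr.
    assert (Hy : inI y) by (destruct Hr as [? _]; auto).
    apply (RightNone n p f (Per f) H (fun w Hw => proj1 Hw) (PerInv n p f H) y d); auto.
    apply (NPf n p f H y Hy). intros m' Hm' E'. destruct Hr as [_ [Hn _]]. apply Hn. split; eauto.
Qed.

Lemma orb_f n p f x : is_IET n p f -> inI x -> forall u, inI u -> in_orbit f x u -> in_orbit f x (f u).
Proof.
  intros H Hx u Hu [m [E|E]].
  - exists (S m). left. rewrite iter_S, E. auto.
  - destruct m as [|m].
    + simpl in E. subst u. exists 1%nat. left. reflexivity.
    + exists m. right. rewrite <- Nat.iter_succ_r. auto.
Qed.

Lemma orb_back n p f x : is_IET n p f -> inI x -> forall w, inI w -> in_orbit f x (f w) -> in_orbit f x w.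
Proof.
  intros H Hx w Hw [m [E|E]].
  - destruct m as [|m].
    + simpl in E. exists 1%nat. right. simpl. auto.
    + rewrite iter_S in E. exists m. left.
      apply (iet_f_inj n p f H); auto. apply (iter_inI n p f H); auto.
  - exists (S m). right. rewrite Nat.iter_succ_r. auto.
Qed.

Theorem proposition8p4 (n : nat) (p : nat -> R) (f : R -> R) :
  is_IET n p f -> irreducible n p f -> billiard_like n p f ->
  modified_keane n p f -> minimal f.
Proof.
  intros H Hirr Hb HK. pose proof (NoPer n p f H Hirr Hb HK) as NP.
  intros x Hx y0 Hy0 eps Heps. apply NNPP. intros Hno.
  assert (Hfar : forall z, inI z -> in_orbit f x z -> eps <= Rabs (z - y0)).
  { intros z Hz Ho. apply Rnot_lt_le. intros Hc. apply Hno. exists z. auto. }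
  set (Orb := fun z => inI z /\ in_orbit f x z).
  set (W := fun z => inI z /\ exists d, 0 < d /\ forall u, z <= u < z + d -> ~ Orb u).
  assert (WI : forall z, W z -> inI z) by (intros z [? _]; auto).
  assert (Winv : forall z, inI z -> (W z <-> W (f z))).
  { intros z Hz. destruct (RightTrans1 n p f H z Hz) as [e [He [He1 [t Ht]]]].
    assert (Hfz : f z = z + t) by (apply Ht; lra).
    split.
    - intros [_ [d [Hd Hs]]]. split; [apply (iet_f_inI n p f H); auto|].
      exists (Rmin d e). split; [apply Rmin_glb_lt; lra|].
      intros u Hu [Hui Hou]. pose proof (Rmin_l d e). pose proof (Rmin_r d e).
      assert (Ew : f (u - t) = u) by (rewrite Ht; [ring| lra]).
      assert (Hwi : inI (u - t)) by (unfold inI in *; lra).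
      apply (Hs (u - t)); [lra|]. split; auto.
      apply (orb_back n p f x H Hx); auto. rewrite Ew. auto.
    - intros [_ [d [Hd Hs]]]. split; auto.
      exists (Rmin d e). split; [apply Rmin_glb_lt; lra|].
      intros u Hu [Hui Hou]. pose proof (Rmin_l d e). pose proof (Rmin_r d e).
      apply (Hs (f u)); [rewrite (Ht u) by lra; lra|]. split; [apply (iet_f_inI n p f H); auto|].
      apply (orb_f n p f x H Hx); auto. }
  assert (Vinv : forall z, inI z -> ((inI z /\ ~ W z) <-> (inI (f z) /\ ~ W (f z)))).
  { intros z Hz. rewrite (Winv z Hz). split; intros [A1 A2]; split; auto.
    apply (iet_f_inI n p f H); auto. }
  apply (GST n p f H Hirr Hb W WI).
  - intros w [Hw [d [Hd Hs]]]. exists (Rmin d (1 - w)). split; [apply Rmin_glb_lt; unfold inI in Hw; lra|].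
    intros u Hu. pose proof (Rmin_l d (1 - w)). pose proof (Rmin_r d (1 - w)).
    split; [unfold inI in *; lra|]. exists (w + d - u). split; [lra|].
    intros u' Hu'. apply Hs. lra.
  - exact Winv.
  - set (z0 := Rmax (-1) (y0 - eps/2)).
    assert (Hz0a : -1 <= z0) by apply Rmax_l.
    assert (Hz0b : y0 - eps/2 <= z0) by apply Rmax_r.
    assert (Hz0c : z0 <= y0) by (apply Rmax_lub; unfold inI in Hy0; lra).
    exists z0. split; [unfold inI in *; lra|]. exists (eps/2). split; [lra|].
    intros u Hu [Hui Hou]. pose proof (Hfar u Hui Hou) as Hf.
    assert (Rabs (u - y0) < eps) by (apply Rabs_def1; lra). lra.
  - exists x. split; auto. intros [_ [d [Hd Hs]]]. apply (Hs x); [lra|].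
    split; auto. exists 0%nat. left. reflexivity.
  - intros y d Hl. apply (LeftZero n p f H HK Hb W WI Winv y d); auto.
    apply NP. destruct Hl as [? _]; unfold inI; lra.
  - intros y d Hl. apply (LeftZero n p f H HK Hb (fun z => inI z /\ ~ W z) (fun z Hz => proj1 Hz) Vinv y d); auto.
    apply NP. destruct Hl as [? _]; unfold inI; lra.
  - intros y d Hr. apply (RightNone n p f W H WI Winv y d); auto.
    destruct Hr as [Hy _]. apply (NPf n p f H y Hy). apply NP; auto.
Qed.
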